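(* Let $E^*=\{\alpha\in\mathbb{Z}[\gamma]:\alpha>0\}$. The sets $$E^{(+)}=\{m+n\gamma^{-1}:\ m,n\in\mathbb{Z},\ m,n\ge1\},\qquad E^{(i)}=\{m\gamma^{-i}+n\gamma^{-i-2}:\ m,n\in\mathbb{Z},\ m\ge1,\ n\ge0\}\quad(i\in\mathbb{N})$$ are pairwise disjoint and their union is $E^*$.
   Context: $\gamma=(1+\sqrt5)/2$ and $\mathbb{Z}[\gamma]=\mathbb{Z}\oplus\mathbb{Z}\gamma^{-1}\subset\mathbb{R}$. *)

(* Defs.v *)
From Stdlib Require Import Reals ZArith.
Open Scope R_scope.

Definition gamma : R := (1 + sqrt 5) / 2.

(* Z[gamma] = Z + Z gamma^{-1} as a subset of R *)
Definition in_Zgamma (x : R) : Prop :=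
  exists m n : Z, x = IZR m + IZR n * / gamma.

Definition Estar (x : R) : Prop := in_Zgamma x /\ 0 < x.

Definition Eplus (x : R) : Prop :=
  exists m n : Z, (1 <= m)%Z /\ (1 <= n)%Z /\ x = IZR m + IZR n * / gamma.

Definition Ei (i : nat) (x : R) : Prop :=
  exists m n : Z, (1 <= m)%Z /\ (0 <= n)%Z /\
    x = IZR m * / gamma ^ i + IZR n * / gamma ^ (i + 2).

(* Main.v *)
Require Import Defs.
From Stdlib Require Import Reals ZArith Lra Lia Psatz.
Open Scope R_scope.

Lemma s5 : sqrt 5 * sqrt 5 = 5.
Proof. apply sqrt_sqrt; lra. Qed.
Lemma s5pos : 0 <= sqrt 5.
Proof. apply sqrt_pos. Qed.

Lemma g_bounds : 1 < gamma < 2.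
Proof. unfold gamma. pose proof s5; pose proof s5pos. split; nra. Qed.

Lemma gg : gamma * gamma = gamma + 1.
Proof. unfold gamma. pose proof s5. nra. Qed.

Lemma gphi : gamma * / gamma = 1.
Proof. pose proof g_bounds. field. lra. Qed.

Lemma phi_eq : / gamma = gamma - 1.
Proof.
  pose proof g_bounds. pose proof gg.
  apply (Rmult_eq_reg_l gamma); [| lra]. rewrite gphi. nra.
Qed.

Lemma phi_bounds : 0 < / gamma < 1.
Proof. rewrite phi_eq. pose proof g_bounds. lra. Qed.

Lemma phi2 : / gamma * / gamma = 1 - / gamma.
Proof. rewrite phi_eq. pose proof gg. nra. Qed.

Lemma gamma_eq : gamma = 1 + / gamma.
Proof. rewrite phi_eq. ring. Qed.

Lemma mulg : forall a b, gamma * (a + b * / gamma) = (a + b) + a * / gamma.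
Proof.
  intros a b. replace (gamma * (a + b * / gamma)) with (gamma * a + b * (gamma * / gamma)) by ring.
  rewrite gphi. rewrite (gamma_eq) at 1. ring.
Qed.

Lemma desc : forall n:nat, forall a b:Z, (Z.abs a + Z.abs b <= Z.of_nat n)%Z ->
  (a*a - a*b - b*b = 0)%Z -> a = 0%Z /\ b = 0%Z.
Proof.
  induction n; intros a b Hn H.
  - lia.
  - destruct (Z.Even_or_Odd a) as [[k Hk]|[k Hk]];
    destruct (Z.Even_or_Odd b) as [[l Hl]|[l Hl]]; subst.
    + assert (Ht: (4*(k*k-k*l-l*l) = 0)%Z) by (rewrite <- H; ring).
      assert (Ht2: (k*k-k*l-l*l = 0)%Z) by lia.
      destruct (Z.eq_dec k 0); destruct (Z.eq_dec l 0); try lia;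
      (destruct (IHn k l) as [? ?]; [lia | exact Ht2 | lia]).
    + assert (Ht: (2*(2*k*k-2*k*l-k-2*l*l-2*l-1)+1 = 0)%Z) by (rewrite <- H; ring). lia.
    + assert (Ht: (2*(2*k*k+2*k-2*k*l-l-2*l*l)+1 = 0)%Z) by (rewrite <- H; ring). lia.
    + assert (Ht: (2*(2*k*k+k-2*k*l-3*l-2*l*l-1)+1 = 0)%Z) by (rewrite <- H; ring). lia.
Qed.

Lemma indep : forall u v : Z, IZR u + IZR v * / gamma = 0 -> u = 0%Z /\ v = 0%Z.
Proof.
  intros u v H.
  assert (Hu : IZR u = - IZR v * / gamma) by lra.
  assert (E : IZR (u*u - u*v - v*v) = 0).
  { rewrite minus_IZR, minus_IZR, !mult_IZR, Hu.
    replace (- IZR v * / gamma * (- IZR v * / gamma) - - IZR v * / gamma * IZR v -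
      IZR v * IZR v) with (IZR v * IZR v * (/gamma * /gamma + /gamma - 1)) by ring.
    rewrite phi2. ring. }
  apply eq_IZR in E.
  apply (desc (Z.abs_nat (Z.abs u + Z.abs v))); [lia | exact E].
Qed.

Lemma uniq : forall a b c d : Z, IZR a + IZR b * / gamma = IZR c + IZR d * / gamma ->
  b = d.
Proof.
  intros a b c d H.
  destruct (indep (a - c) (b - d)) as [_ H2]; [|lia].
  rewrite !minus_IZR. lra.
Qed.

Lemma Ei0_iff : forall x, Ei 0 x <-> exists m n : Z, (1 <= m)%Z /\ (0 <= n)%Z /\
   x = IZR (m + n) + IZR (- n) * / gamma.
Proof.
  intros x. unfold Ei. simpl.
  assert (E : forall m n : Z, IZR m * / 1 + IZR n * / (gamma * (gamma * 1)) =
     IZR (m + n) + IZR (- n) * / gamma).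
  { intros m n. rewrite Rinv_1, !Rmult_1_r, Rinv_mult, phi2, plus_IZR, opp_IZR. ring. }
  split; intros [m [n [H1 [H2 H3]]]]; exists m, n; repeat split; auto;
  rewrite H3; [apply E | symmetry; apply E].
Qed.

Lemma Ei_S : forall i x, Ei (S i) x -> Ei i (gamma * x).
Proof.
  intros i x [m [n [H1 [H2 H3]]]]. exists m, n. repeat split; auto.
  rewrite H3. rewrite <- !pow_inv. simpl.
  replace (gamma * (IZR m * (/ gamma * (/ gamma) ^ i) + IZR n * (/ gamma * (/ gamma) ^ (i + 2))))
   with ((gamma * / gamma) * (IZR m * (/ gamma) ^ i + IZR n * (/ gamma) ^ (i + 2))) by ring.
  rewrite gphi. ring.
Qed.

Lemma Ei_S' : forall i y, Ei i y -> Ei (S i) (/ gamma * y).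
Proof.
  intros i y [m [n [H1 [H2 H3]]]]. exists m, n. repeat split; auto.
  rewrite H3. rewrite <- !pow_inv. simpl. ring.
Qed.

Lemma Ei_gamma : forall i x, Ei i x -> Ei 0 (gamma ^ i * x).
Proof.
  induction i; intros x H.
  - simpl. rewrite Rmult_1_l. exact H.
  - apply Ei_S in H. apply IHi in H. simpl.
    replace (gamma * gamma ^ i * x) with (gamma ^ i * (gamma * x)) by ring. exact H.
Qed.

Lemma A : forall x, Eplus x \/ Ei 0 x -> Eplus (gamma * x).
Proof.
  intros x [[m [n [H1 [H2 H3]]]] | H].
  - exists (m + n)%Z, m. repeat split; try lia.
    rewrite H3, plus_IZR, mulg. ring.
  - apply Ei0_iff in H. destruct H as [m [n [H1 [H2 H3]]]].
    exists m, (m + n)%Z. repeat split; try lia.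
    rewrite H3, !plus_IZR, opp_IZR, mulg. ring.
Qed.

Lemma A_iter : forall i x, Eplus x -> Eplus (gamma ^ i * x).
Proof.
  induction i; intros x H.
  - simpl. rewrite Rmult_1_l. exact H.
  - simpl. replace (gamma * gamma ^ i * x) with (gamma ^ i * (gamma * x)) by ring.
    apply IHi. apply A. left. exact H.
Qed.

Lemma disj0 : forall x, ~ (Eplus x /\ Ei 0 x).
Proof.
  intros x [[m [n [H1 [H2 H3]]]] H].
  apply Ei0_iff in H. destruct H as [m' [n' [H1' [H2' H3']]]].
  rewrite H3 in H3'. apply uniq in H3'. lia.
Qed.

Lemma Estar_phi : forall y, Estar y -> Estar (/ gamma * y).
Proof.
  intros y [[a [b H]] Hp]. split.
  - exists b, (a - b)%Z. rewrite H, minus_IZR.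
    replace (/ gamma * (IZR a + IZR b * / gamma)) with
     (IZR a * / gamma + IZR b * (/ gamma * / gamma)) by ring.
    rewrite phi2. ring.
  - pose proof phi_bounds. nra.
Qed.

Lemma Ei_Estar : forall i x, Ei i x -> Estar x.
Proof.
  induction i; intros x H.
  - pose proof H as H'. apply Ei0_iff in H. destruct H as [m [n [H1 [H2 H3]]]].
    split. { exists (m+n)%Z, (-n)%Z. exact H3. }
    destruct H' as [m0 [n0 [? [? ->]]]].
    simpl. rewrite Rinv_1, Rmult_1_r.
    assert (0 < / (gamma * (gamma * 1))).
    { apply Rinv_0_lt_compat. pose proof g_bounds. nra. }
    apply IZR_le in H. apply IZR_le in H0. nra.
  - apply Ei_S in H. apply IHi in H. apply Estar_phi in H.
    replace (/ gamma * (gamma * x)) with ((gamma * / gamma) * x) in H by ring.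
    rewrite gphi, Rmult_1_l in H. exact H.
Qed.

Lemma exist_main : forall n : nat, forall a b : Z,
  (Z.abs a + Z.abs b <= Z.of_nat n)%Z -> 0 < IZR a + IZR b * / gamma ->
  Eplus (IZR a + IZR b * / gamma) \/ exists i, Ei i (IZR a + IZR b * / gamma).
Proof.
  pose proof phi_bounds as Hphi.
  induction n; intros a b Hn Hp.
  - assert (a = 0%Z) by lia. assert (b = 0%Z) by lia. subst. simpl in Hp. lra.
  - destruct (Z_le_gt_dec 1 a); destruct (Z_le_gt_dec 1 b).
    + left. exists a, b. auto.
    + destruct (Z_le_gt_dec 1 (a + b)).
      * right. exists 0%nat. apply Ei0_iff. exists (a+b)%Z, (-b)%Z.
        repeat split; try lia. f_equal; [f_equal; ring | f_equal; f_equal; ring].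
      *
        assert (Hb : (b < 0)%Z) by lia.
        assert (Hy : 0 < IZR (a + b) + IZR a * / gamma).
        { rewrite plus_IZR. replace (IZR a + IZR b + IZR a * / gamma) with
            (gamma * (IZR a + IZR b * / gamma)) by (rewrite mulg; ring).
          pose proof g_bounds. nra. }
        destruct (IHn (a + b)%Z a ltac:(lia) Hy) as [Hq | [i Hq]].
        --
           destruct Hq as [m [k [H1 [H2 H3]]]].
           assert (Hx : IZR a + IZR b * / gamma = / gamma * (IZR (a + b) + IZR a * / gamma)).
           { rewrite plus_IZR.
             replace (/ gamma * (IZR a + IZR b + IZR a * / gamma)) with
               (IZR a * / gamma + IZR b * / gamma + IZR a * (/ gamma * / gamma)) by ring.
             rewrite phi2. ring. }
           rewrite Hx, H3.
           destruct (Z_le_gt_dec m k).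
           ++ right. exists 0%nat. apply Ei0_iff. exists m, (k - m)%Z.
              repeat split; try lia. rewrite plus_IZR, opp_IZR, minus_IZR.
              replace (/ gamma * (IZR m + IZR k * / gamma)) with
               (IZR m * / gamma + IZR k * (/ gamma * / gamma)) by ring.
              rewrite phi2. ring.
           ++ left. exists k, (m - k)%Z. repeat split; try lia.
              rewrite minus_IZR.
              replace (/ gamma * (IZR m + IZR k * / gamma)) with
               (IZR m * / gamma + IZR k * (/ gamma * / gamma)) by ring.
              rewrite phi2. ring.
        -- right. exists (S i). apply Ei_S' in Hq.
           assert (Hx : IZR a + IZR b * / gamma = / gamma * (IZR (a + b) + IZR a * / gamma)).
           { rewrite plus_IZR.
             replace (/ gamma * (IZR a + IZR b + IZR a * / gamma)) with
               (IZR a * / gamma + IZR b * / gamma + IZR a * (/ gamma * / gamma)) by ring.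
             rewrite phi2. ring. }
           rewrite Hx. exact Hq.
    +
      destruct (Z.eq_dec a 0).
      * subst. right. exists 1%nat. exists b, 0%Z. repeat split; try lia.
        simpl. rewrite Rmult_1_r. ring.
      * assert (Hab : (0 < a + b)%Z).
        { apply lt_IZR. rewrite plus_IZR. pose proof (IZR_le _ _ l). nra. }
        assert (Hy : 0 < IZR (a + b) + IZR a * / gamma).
        { rewrite plus_IZR. replace (IZR a + IZR b + IZR a * / gamma) with
            (gamma * (IZR a + IZR b * / gamma)).
          - pose proof g_bounds. nra.
          - rewrite mulg. ring. }
        destruct (IHn (a + b)%Z a ltac:(lia) Hy) as [Hq | [i Hq]].
        -- destruct Hq as [m [k [H1 [H2 H3]]]].
           assert (Hx : IZR a + IZR b * / gamma = / gamma * (IZR (a + b) + IZR a * / gamma)).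
           { rewrite plus_IZR.
             replace (/ gamma * (IZR a + IZR b + IZR a * / gamma)) with
               (IZR a * / gamma + IZR b * / gamma + IZR a * (/ gamma * / gamma)) by ring.
             rewrite phi2. ring. }
           rewrite Hx, H3.
           destruct (Z_le_gt_dec m k).
           ++ right. exists 0%nat. apply Ei0_iff. exists m, (k - m)%Z.
              repeat split; try lia. rewrite plus_IZR, opp_IZR, minus_IZR.
              replace (/ gamma * (IZR m + IZR k * / gamma)) with
               (IZR m * / gamma + IZR k * (/ gamma * / gamma)) by ring.
              rewrite phi2. ring.
           ++ left. exists k, (m - k)%Z. repeat split; try lia.
              rewrite minus_IZR.
              replace (/ gamma * (IZR m + IZR k * / gamma)) with
               (IZR m * / gamma + IZR k * (/ gamma * / gamma)) by ring.
              rewrite phi2. ring.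
        -- right. exists (S i). apply Ei_S' in Hq.
           assert (Hx : IZR a + IZR b * / gamma = / gamma * (IZR (a + b) + IZR a * / gamma)).
           { rewrite plus_IZR.
             replace (/ gamma * (IZR a + IZR b + IZR a * / gamma)) with
               (IZR a * / gamma + IZR b * / gamma + IZR a * (/ gamma * / gamma)) by ring.
             rewrite phi2. ring. }
           rewrite Hx. exact Hq.
    +
      exfalso. assert (IZR a <= 0) by (apply IZR_le; lia).
      assert (IZR b <= 0) by (apply IZR_le; lia). nra.
Qed.

Theorem mainTheorem12 :
  (forall (i : nat) (x : R), ~ (Eplus x /\ Ei i x)) /\
  (forall (i j : nat) (x : R), i <> j -> ~ (Ei i x /\ Ei j x)) /\
  (forall x : R, Estar x <-> (Eplus x \/ exists i : nat, Ei i x)).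
Proof.
  split; [|split].
  - intros i x [H1 H2]. apply (disj0 (gamma ^ i * x)). split.
    + apply A_iter. exact H1.
    + apply Ei_gamma. exact H2.
  - assert (K : forall i j x, (i < j)%nat -> ~ (Ei i x /\ Ei j x)).
    { intros i j x Hij [H1 H2].
      apply Ei_gamma in H1. apply Ei_gamma in H2.
      apply (disj0 (gamma ^ j * x)). split; [|exact H2].
      replace j with ((j - i) + i)%nat by lia. rewrite pow_add, Rmult_assoc.
      destruct (j - i)%nat as [|k] eqn:E; [lia|].
      simpl. replace (gamma * gamma ^ k * (gamma ^ i * x)) with
        (gamma ^ k * (gamma * (gamma ^ i * x))) by ring. apply A_iter. apply A. right. exact H1. }
    intros i j x Hij [Ha Hb]. destruct (Nat.lt_gt_cases i j) as [[?|?] _]; auto.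
    + apply (K i j x); auto.
    + apply (K j i x); auto.
  - intros x. split.
    + intros [[a [b ->]] Hp].
      apply (exist_main (Z.abs_nat (Z.abs a + Z.abs b))); [lia | exact Hp].
    + intros [[m [n [H1 [H2 H3]]]] | [i H]].
      * split. { exists m, n. exact H3. }
        rewrite H3. pose proof phi_bounds. apply IZR_le in H1. apply IZR_le in H2. nra.
      * eapply Ei_Estar; eauto.
Qed.
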